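(* Let $\mathcal{H},\mathcal{K}$ be complex Hilbert spaces and $(f_*,f^* ):(\mathsf{P}(\mathcal{H}),\mathsf{L}(\mathcal{H}),\bar e_{\mathcal{H}})\to(\mathsf{P}(\mathcal{K}),\mathsf{L}(\mathcal{K}),\bar e_{\mathcal{K}})$ a Chu morphism. Then for every nonzero $\psi\in\mathcal{H}$ and every $S\in\mathsf{L}(\mathcal{K})$: $[\psi]\subseteq f^*(S)$ if and only if $f_*([\psi])\subseteq S$.
   Context: A Chu morphism $(X,A,e)\to(X',A',e')$ between Chu spaces over $[0,1]$ is a pair $(f_*:X\to X',f^*:A'\to A)$ with $e(x,f^*(a'))=e'(f_*(x),a')$ for all $x,a'$. For a complex Hilbert space $\mathcal{H}$: $\mathsf{L}(\mathcal{H})$ is the set of closed subspaces, $P_S$ the orthogonal projector onto $S$, $\mathsf{P}(\mathcal{H})$ the set of rays $[\psi]=\{\lambda\psi:\lambda\in\mathbb{C}\}$, $\psi\ne0$, and $\bar e_{\mathcal{H}}([\psi],S)=\|P_S\psi\|^2/\|\psi\|^2$. *)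

(* Defs.v *)
From Stdlib Require Import ClassicalEpsilon.
From mathcomp Require Import all_boot all_algebra.
From mathcomp Require Import reals.
From mathcomp.real_closed Require Import complex.
Import GRing.Theory Num.Theory.
Set Implicit Arguments. Unset Strict Implicit. Unset Printing Implicit Defensive.
Local Open Scope ring_scope.

(* A complex Hilbert space: a complex vector space V with an inner product
   (conjugate-linear in the first argument, linear in the second), complete
   for the induced norm. *)
Record hilbert (R : realType) (V : lmodType R[i]) := Hilbert {
  inner : V -> V -> R[i];
  inner_linear : forall (a : R[i]) (x y z : V),
      inner x (a *: y + z) = a * inner x y + inner x z;
  inner_conj : forall x y : V, inner y x = (inner x y)^*;
  inner_ge0 : forall x : V, 0 <= inner x x;
  inner_eq0 : forall x : V, inner x x = 0 -> x = 0;
  inner_complete : forall u : nat -> V,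
      (forall e : R, 0 < e -> exists N, forall m n, (N <= m)%N -> (N <= n)%N ->
          Num.sqrt (complex.Re (inner (u m - u n) (u m - u n))) < e) ->
      exists l : V, forall e : R, 0 < e -> exists N, forall n, (N <= n)%N ->
          Num.sqrt (complex.Re (inner (u n - l) (u n - l))) < e
}.

Section Defs.
Variables (R : realType) (V : lmodType R[i]) (H : hilbert V).

Definition normH (x : V) : R := Num.sqrt (complex.Re (inner H x x)).

Definition converges (u : nat -> V) (l : V) : Prop :=
  forall e : R, 0 < e -> exists N, forall n, (N <= n)%N -> normH (u n - l) < e.

Record csub := CSub {
  cs_set : V -> Prop;
  cs_0 : cs_set 0;
  cs_lin : forall (a : R[i]) (x y : V), cs_set x -> cs_set y -> cs_set (a *: x + y);
  cs_closed : forall (u : nat -> V) (l : V),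
      (forall n, cs_set (u n)) -> converges u l -> cs_set l
}.

Record ray := Ray {
  ray_set : V -> Prop;
  ray_gen : exists psi : V, psi <> 0 /\
      forall v, ray_set v <-> exists l : R[i], v = l *: psi
}.

Definition ray_of (psi : V) (hpsi : psi <> 0) : ray.
Proof.
refine (@Ray (fun v => exists l : R[i], v = l *: psi) _).
by exists psi; split.
Defined.

(* orthogonal projector P_S : the element p of S with psi - p orthogonal to S
   (exists uniquely in a Hilbert space; chosen by Hilbert's epsilon). *)
Definition proj (S : csub) (psi : V) : V :=
  epsilon (inhabits 0)
    (fun p => cs_set S p /\ forall s, cs_set S s -> inner H s (psi - p) = 0).

(* ebar_H([psi], S) = ||P_S psi||^2 / ||psi||^2, computed with a chosen
   nonzero representative of the ray (independent of the choice). *)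
Definition ebar (r : ray) (S : csub) : R :=
  let psi := epsilon (inhabits 0) (fun v => v <> 0 /\ ray_set r v) in
  normH (proj S psi) ^+ 2 / normH psi ^+ 2.

End Defs.

Record chu_morph (R : realType) (V W : lmodType R[i])
    (H : hilbert V) (K : hilbert W) := ChuMorph {
  f_lower : ray V -> ray W;
  f_upper : csub K -> csub H;
  chu_adj : forall (x : ray V) (a : csub K),
      ebar x (f_upper a) = ebar (f_lower x) a
}.

(* Main.v *)
Require Import Defs.
From Stdlib Require Import ClassicalEpsilon.
From mathcomp Require Import all_boot all_algebra.
From mathcomp Require Import reals.
From mathcomp.real_closed Require Import complex.
From mathcomp Require Import ring lra.
Import order.Order.TTheory GRing.Theory Num.Theory.
Set Implicit Arguments. Unset Strict Implicit. Unset Printing Implicit Defensive.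
Local Open Scope ring_scope.

Local Notation Rc := complex.Re.
Local Notation Ic := complex.Im.

Section Cx.
Variable R : realType.
Implicit Types x y : R[i].
Lemma ReD x y : Rc (x + y) = Rc x + Rc y. Proof. by case: x => a b; case: y. Qed.
Lemma ImD x y : Ic (x + y) = Ic x + Ic y. Proof. by case: x => a b; case: y. Qed.
Lemma ReJ x : Rc (Num.conj x) = Rc x. Proof. by case: x. Qed.
Lemma ImJ x : Ic (Num.conj x) = - Ic x. Proof. by case: x. Qed.
Lemma conjR (r : R) : Num.conj (r%:C)%C = (r%:C)%C :> R[i].
Proof. by apply/eqP; rewrite eq_complex /= oppr0 !eqxx. Qed.
Lemma ReMR (r : R) x : Rc ((r%:C)%C * x) = r * Rc x.
Proof. by case: x => a b /=; rewrite mul0r subr0. Qed.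
Lemma Rei x : Rc ('i%C * x) = - Ic x.
Proof. by case: x => a b /=; rewrite !mul0r mul1r sub0r. Qed.
Lemma ge0C x : 0 <= x -> Ic x = 0 /\ 0 <= Rc x.
Proof. by rewrite lecE => /andP [/eqP H0 ->]; rewrite H0. Qed.
Lemma C0P x : Rc x = 0 -> Ic x = 0 -> x = 0.
Proof. by case: x => a b /= -> ->. Qed.
Lemma conjD x y : Num.conj (x + y) = Num.conj x + Num.conj y.
Proof. by case: x => a b; case: y => c d; apply/eqP; rewrite eq_complex /= opprD !eqxx. Qed.
Lemma conjM x y : Num.conj (x * y) = Num.conj x * Num.conj y.
Proof.
case: x => a b; case: y => c d; apply/eqP; rewrite eq_complex /=.
by apply/andP; split; apply/eqP; ring.
Qed.
Lemma conjN x : Num.conj (- x) = - Num.conj x.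
Proof. by case: x => a b; apply/eqP; rewrite eq_complex /= !eqxx. Qed.
Lemma ReN x : Rc (- x) = - Rc x. Proof. by case: x. Qed.
Lemma ImN x : Ic (- x) = - Ic x. Proof. by case: x. Qed.
Lemma conj0 : Num.conj (0 : R[i]) = 0. Proof. exact: conjR. Qed.
End Cx.

Section IP.
Variables (R : realType) (V : lmodType R[i]) (H : hilbert V).
Local Notation ip := (inner H).
Local Notation cR r := ((r%:C)%C : R[i]).

Lemma ipDr x y z : ip x (y + z) = ip x y + ip x z.
Proof. by have := inner_linear H 1 x y z; rewrite scale1r mul1r. Qed.
Lemma ip0r x : ip x 0 = 0.
Proof.
have := inner_linear H 1 x 0 0; rewrite scale1r addr0 mul1r => h.
by have := congr1 (fun t => t - ip x 0) h; rewrite subrr addrK.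
Qed.
Lemma ipZr a x y : ip x (a *: y) = a * ip x y.
Proof. by have := inner_linear H a x y 0; rewrite !addr0 ip0r addr0. Qed.
Lemma ipNr x y : ip x (- y) = - ip x y.
Proof. by rewrite -scaleN1r ipZr mulN1r. Qed.
Lemma ipBr x y z : ip x (y - z) = ip x y - ip x z.
Proof. by rewrite ipDr ipNr. Qed.
Lemma ipDl x y z : ip (y + z) x = ip y x + ip z x.
Proof. by rewrite inner_conj ipDr conjD -!inner_conj. Qed.
Lemma ipZl a x y : ip (a *: y) x = Num.conj a * ip y x.
Proof. by rewrite inner_conj ipZr conjM -!inner_conj. Qed.
Lemma ip0l x : ip 0 x = 0.
Proof. by rewrite inner_conj ip0r conj0. Qed.
Lemma ipNl x y : ip (- y) x = - ip y x.
Proof. by rewrite inner_conj ipNr conjN -inner_conj. Qed.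
Lemma ipBl x y z : ip (y - z) x = ip y x - ip z x.
Proof. by rewrite ipDl ipNl. Qed.

Definition Q x := Rc (ip x x).
Lemma Q_ge0 x : 0 <= Q x.
Proof. by have [_] := ge0C (inner_ge0 H x). Qed.
Lemma ipI x : Ic (ip x x) = 0.
Proof. by have [] := ge0C (inner_ge0 H x). Qed.
Lemma Q_eq0 x : Q x = 0 -> x = 0.
Proof. by move=> h; apply: inner_eq0; apply: C0P; [exact: h | exact: ipI]. Qed.
Lemma ReC x y : Rc (ip y x) = Rc (ip x y).
Proof. by rewrite inner_conj ReJ. Qed.
Lemma QD x y : Q (x + y) = Q x + Q y + 2 * Rc (ip x y).
Proof.
rewrite /Q ipDl !ipDr !ReD (ReC x y); ring.
Qed.
Lemma ReZr (r : R) x y : Rc (ip x (cR r *: y)) = r * Rc (ip x y).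
Proof. by rewrite ipZr ReMR. Qed.
Lemma QZ (r : R) x : Q (cR r *: x) = r ^+ 2 * Q x.
Proof. by rewrite /Q ipZl ipZr conjR mulrA -rmorphM ReMR expr2. Qed.
Lemma QN x : Q (- x) = Q x.
Proof. by rewrite /Q ipNl ipNr opprK. Qed.
Lemma normH_sqr x : normH H x ^+ 2 = Q x.
Proof. by rewrite /normH sqr_sqrtr // Q_ge0. Qed.
End IP.

Lemma inv_small (R : realType) (e : R) (N k : nat) : 0 < e -> e^-1 < N%:R ->
  (N <= k)%N -> (k.+1%:R : R)^-1 < e.
Proof.
move=> e0 hN hk.
have hk' : (N%:R : R) <= k%:R by rewrite ler_nat.
rewrite -[e]invrK ltf_pV2 ?posrE ?invr_gt0 ?ltr0Sn //.
by rewrite -natr1; lra.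
Qed.

Lemma exN (R : realType) (x : R) : exists N : nat, x < N%:R.
Proof.
case: (lerP 0 x) => hx; first by exists (Num.Def.archi_bound x); exact: archi_boundP.
by exists 0%N; lra.
Qed.

Section Proj.
Variables (R : realType) (V : lmodType R[i]) (H : hilbert V).
Local Notation ip := (inner H).
Local Notation cR r := ((r%:C)%C : R[i]).
Local Notation Q := (Q H).
Variable S : csub H.
Local Notation inS := (cs_set S).

Lemma cs_add x y : inS x -> inS y -> inS (x + y).
Proof. by move=> hx hy; have := cs_lin 1 hx hy; rewrite scale1r. Qed.
Lemma cs_scale a x : inS x -> inS (a *: x).
Proof. by move=> hx; have := cs_lin a hx (cs_0 S); rewrite addr0. Qed.
Lemma cs_opp x : inS x -> inS (- x).
Proof. by move=> hx; rewrite -scaleN1r; apply: cs_scale. Qed.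
Lemma cs_sub x y : inS x -> inS y -> inS (x - y).
Proof. by move=> hx hy; apply: cs_add => //; apply: cs_opp. Qed.

Lemma ReZl (r : R) x y : Rc (ip (cR r *: x) y) = r * Rc (ip x y).
Proof. by rewrite ReC ReZr ReC. Qed.

Lemma par x y : Q (x + y) + Q (x - y) = 2 * Q x + 2 * Q y.
Proof. by rewrite !QD QN ipNr ReN; ring. Qed.

Lemma half_id (x : V) : cR (2^-1) *: (x + x) = x.
Proof.
rewrite -{1 2}[x]scale1r -scalerDl scalerA.
have -> : cR (2^-1) * (1 + 1) = 1.
  apply/eqP; rewrite eq_complex /= !mul0r !addr0 subr0 mulr0 eqxx andbT.
  by apply/eqP; rewrite mulVf // pnatr_eq0.
by rewrite scale1r.
Qed.

Lemma proj_exists (phi : V) :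
  exists p, inS p /\ forall s, inS s -> ip s (phi - p) = 0.
Proof.
pose E := fun q : R => exists s, inS s /\ q = Q (phi - s).
have Ene : exists q, E q by exists (Q (phi - 0)), 0; split=> //; exact: cs_0.
have Elb : forall q, E q -> 0 <= q by move=> q [s [_ ->]]; exact: Q_ge0.
pose d := inf E.
have dle : forall s, inS s -> d <= Q (phi - s).
  move=> s hs; apply: (ge_inf (E := E)); first by exists 0 => q /Elb.
  by exists s.
have d0 : 0 <= d by apply: lb_le_inf => // q /Elb.
have hu : forall n : nat, exists s, inS s /\ Q (phi - s) < d + (n.+1%:R)^-1.
  move=> n; have [|q [s [hs ->]] hq] := inf_lt (S := E) Ene (x := d + (n.+1%:R)^-1).
    by rewrite /d ltrDl invr_gt0 ltr0Sn.
  by exists s.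
have [u hu'] := choice _ hu.
have uS : forall n, inS (u n) by move=> n; case: (hu' n).
have uQ : forall n, Q (phi - u n) < d + (n.+1%:R)^-1 by move=> n; case: (hu' n).
have cauchy : forall m n, Q (u m - u n) <= 2 * (m.+1%:R)^-1 + 2 * (n.+1%:R)^-1.
  move=> m n.
  have hp := par (phi - u n) (phi - u m).
  have e1 : phi - u n - (phi - u m) = u m - u n.
    by rewrite opprB addrC addrA subrK.
  rewrite e1 in hp.
  have hw : inS (cR (2^-1) *: (u m + u n)) by apply/cs_scale/cs_add.
  have h1 := dle _ hw.
  have h2 : cR (2^-1) *: (phi - u n + (phi - u m)) = phi - cR (2^-1) *: (u m + u n).
    have -> : phi - u n + (phi - u m) = (phi + phi) - (u m + u n).
      by rewrite addrACA -opprD (addrC (u n)).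
    by rewrite scalerBr half_id.
  have h3 := QZ H (2^-1) (phi - u n + (phi - u m)).
  rewrite h2 in h3.
  have h4 := uQ m; have h5 := uQ n.
  have : (2^-1 : R) ^+ 2 = 4^-1.
    by rewrite expr2 -invfM; congr (_^-1); rewrite -natrM.
  move=> h6; rewrite h6 in h3.
  have h7 : 4 * d <= Q (phi - u n + (phi - u m)).
    have : 4 * d <= 4 * (4^-1 * Q (phi - u n + (phi - u m))) by rewrite -h3 ler_pM2l.
    by rewrite mulrA mulfV ?mul1r // pnatr_eq0.
  suff hh : Q (u m - u n) <= 2 * (m.+1%:R^-1 : R) + 2 * (n.+1%:R^-1 : R) by exact: hh.
  clear -hp h4 h5 h7; move: hp h4 h5 h7; generalize (m.+1%:R^-1 : R) (n.+1%:R^-1 : R) (Q (phi - u n + (phi - u m))) (Q (u m - u n)) (Q (phi - u n)) (Q (phi - u m)) => a b c e f g. lra.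
have [l hl] : exists l : V, forall e : R, 0 < e -> exists N, forall n, (N <= n)%N ->
    Num.sqrt (Rc (ip (u n - l) (u n - l))) < e.
  apply: inner_complete => e e0.
  have e20 : 0 < e ^+ 2 by rewrite exprn_gt0.
  have [N hN] := exN ((e ^+ 2 / 4)^-1).
  exists N => m n hm hn.
  have hm' := inv_small (divr_gt0 e20 (ltr0Sn _ 3)) hN hm.
  have hn' := inv_small (divr_gt0 e20 (ltr0Sn _ 3)) hN hn.
  have hc := cauchy m n.
  have hlt : Q (u m - u n) < e ^+ 2.
    have h4 : e ^+ 2 = 4 * (e ^+ 2 / 4) by rewrite mulrC divfK // pnatr_eq0.
    move: hc hm' hn' h4.
    set a := (m.+1%:R^-1 : R); set b := (n.+1%:R^-1 : R); set f := e ^+ 2 / 4.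
    set g := e ^+ 2. lra.
  have h2 : Num.sqrt (Q (u m - u n)) < e.
    rewrite -(ltr_sqrt _ e20) sqrtr_sqr (ger0_norm (ltW e0)) in hlt; exact: hlt.
  exact: h2.
have lS : inS l by apply: (cs_closed (u := u)) => //; exact: hl.
have hl' : forall c : R, 0 < c -> exists N, forall n, (N <= n)%N -> Q (u n - l) < c.
  move=> c c0; have sc0 : 0 < Num.sqrt c by rewrite sqrtr_gt0.
  have [N hN] := hl _ sc0.
  by exists N => n /hN; rewrite ltr_sqrt.
have hz : Q (phi - l) <= d.
  apply/ler_addgt0Pr => eta eta0.
  have den0 : 0 < 4 * d + eta + 1 by lra.
  pose eps := eta / (4 * d + eta + 1).
  have eps0 : 0 < eps by rewrite divr_gt0.
  have heps : eps * (4 * d + eta + 1) = eta by rewrite /eps divfK // gt_eqF.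
  have den1 : 0 < 4 * (eps + 1) by lra.
  pose c := eps * eta / (4 * (eps + 1)).
  have c0 : 0 < c by rewrite divr_gt0 // mulr_gt0.
  have hc : c * (4 * (eps + 1)) = eps * eta by rewrite /c divfK // gt_eqF.
  have [N2 hN2] := hl' c c0.
  have eta4 : 0 < eta / 4 by rewrite divr_gt0.
  have [N1 hN1] := exN ((eta / 4)^-1).
  pose n := maxn N1 N2.
  have hx : Q (phi - u n) < d + eta / 4.
    have := uQ n; have := inv_small eta4 hN1 (leq_maxl N1 N2).
    rewrite -/n; set a := (n.+1%:R^-1 : R); lra.
  have hy : Q (u n - l) < c := hN2 n (leq_maxr N1 N2).
  have ez : phi - l = (phi - u n) + (u n - l) by rewrite addrA subrK.
  have k2 := Q_ge0 H (cR eps *: (phi - u n) + - (u n - l)).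
  rewrite QD QZ QN ipNr ReN ReZl in k2.
  rewrite ez QD.
  have X0 := Q_ge0 H (phi - u n); have Y0 := Q_ge0 H (u n - l).
  move: k2 hx hy X0 Y0.
  set X := Q (phi - u n); set Y := Q (u n - l); set r := Rc (ip (phi - u n) (u n - l)).
  move=> k2 hx hy X0 Y0.
  have f1 : eps * X <= eps * (d + eta / 4) by rewrite ler_pM2l // ltW.
  have f2 : eps * (d + eta / 4) <= eta / 4.
    have h4 : (4 : R) * 4^-1 = 1 by rewrite mulfV // pnatr_eq0.
    move: h4 heps; set q := (4^-1 : R); nra.
  have f3 : eps * (eps * X) <= eps * (eta / 4) by rewrite ler_pM2l //; lra.
  have f4 : (eps + 1) * Y <= (eps + 1) * c by rewrite ler_pM2l ?ltW //; lra.
  have f5 : eps * (X + Y + 2 * r) <= eps * (d + eta).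
    have h4 : (4 : R) * (eta / 4) = eta by rewrite mulrC divfK // pnatr_eq0.
    move: h4 hc; set q := eta / 4; nra.
  by rewrite ler_pM2l in f5.
have hre : forall s, inS s -> Rc (ip (phi - l) s) = 0.
  move=> s hs.
  have key : forall t : R, 0 <= t ^+ 2 * Q s + 2 * (- t * Rc (ip (phi - l) s)).
    move=> t.
    have hts : inS (l + cR t *: s) by apply: cs_add => //; apply: cs_scale.
    have h1 := dle _ hts.
    have e1 : phi - (l + cR t *: s) = (phi - l) + cR (- t) *: s.
      by rewrite opprD addrA; congr (_ + _); rewrite rmorphN scaleNr.
    rewrite e1 QD QZ ReZr in h1.
    lra.
  have [hQ|hQ] := eqVneq (Q s) 0.
    by rewrite (Q_eq0 hQ) ip0r.
  have Qp : 0 < Q s by rewrite lt_def hQ Q_ge0.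
  have := key (Rc (ip (phi - l) s) / Q s).
  set r := Rc (ip (phi - l) s).
  have hq : r / Q s * Q s = r by rewrite divfK.
  move: hq; set t := r / Q s; move=> hq h.
  nra.
exists l; split => // s hs.
have h1 := hre s hs.
have h2 := hre _ (cs_scale 'i%C hs).
rewrite ipZr Rei in h2.
have h3 : ip (phi - l) s = 0 by apply: C0P => //; lra.
by rewrite inner_conj h3 conj0.
Qed.
End Proj.

Section Main.
Variables (R : realType) (V : lmodType R[i]) (H : hilbert V).
Local Notation ip := (inner H).
Local Notation Q := (Q H).

Lemma ray_ebar (r : ray V) (S : csub H) :
  (forall v, ray_set r v -> cs_set S v) <-> ebar r S = 1.
Proof.
rewrite /ebar.
set P := fun v => v <> 0 /\ ray_set r v.
set phi := epsilon (inhabits 0) P.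
have [psi0 [hpsi0 hr]] := ray_gen r.
have hphi : P phi.
  apply: epsilon_spec; exists psi0; split => //; apply/hr; exists 1; by rewrite scale1r.
case: hphi => phi0 phir.
have [l0 el0] := (hr phi).1 phir.
have l00 : l0 != 0.
  by apply/eqP => l0e; apply: phi0; rewrite el0 l0e scale0r.
have Qphi : 0 < Q phi.
  rewrite lt_def Q_ge0 andbT; apply/eqP => /Q_eq0; exact: phi0.
have sub_iff : (forall v, ray_set r v -> cs_set S v) <-> cs_set S phi.
  split; first by apply.
  move=> h v /hr [l ->].
  have -> : l *: psi0 = (l / l0) *: phi by rewrite el0 scalerA divfK.
  exact: cs_scale.
have := epsilon_spec (inhabits 0) _ (proj_exists S phi).
rewrite -/(proj S phi); set p := proj S phi; case=> pS pp.
have pyth : Q phi = Q p + Q (phi - p).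
  by rewrite -{1}(subrK p phi) addrC QD (pp p pS) /= mulr0 addr0.
rewrite sub_iff !normH_sqr.
split.
  move=> hS.
  have hd : cs_set S (phi - p) by apply: cs_sub.
  have := pp _ hd => /inner_eq0 /eqP; rewrite subr_eq0 => /eqP <-.
  by rewrite mulfV // gt_eqF.
move=> h.
have e : Q p = Q phi by rewrite -[Q p](@divfK _ (Q phi)) ?h ?mul1r // gt_eqF.
have : Q (phi - p) = 0 by lra.
by move=> /Q_eq0 /eqP; rewrite subr_eq0 => /eqP ->.
Qed.
End Main.

Theorem proposition3p4 (R : realType) (V W : lmodType R[i])
    (H : hilbert V) (K : hilbert W) (f : chu_morph H K)
    (psi : V) (hpsi : psi <> 0) (S : csub K) :
  (forall v, ray_set (ray_of hpsi) v -> cs_set (f_upper f S) v) <->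
  (forall w, ray_set (f_lower f (ray_of hpsi)) w -> cs_set S w).
Proof.
by rewrite (ray_ebar (ray_of hpsi) (f_upper f S)) (ray_ebar (f_lower f (ray_of hpsi)) S) chu_adj.
Qed.
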